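(* Let $n\ge 1$ be an integer and let $U_{6n}=\langle a,b : a^{2n}=b^3=1,\ a^{-1}ba=b^{-1}\rangle$ (a group of order $6n$). Let $\Gamma_{U_{6n}}$ be its non-commuting graph. Then the spectrum of the distance Laplacian matrix $D^L(\Gamma_{U_{6n}})$ (eigenvalues counted with multiplicity, multiplicities being added if two of the listed values coincide) consists of: (a) $0$ with multiplicity $1$; (b) $5n$ with multiplicity $3$; (c) $6n$ with multiplicity $3(n-1)$; (d) $7n$ with multiplicity $2n-1$.
   Context: For a finite non-abelian group $G$ with centre $Z(G)$, the non-commuting graph $\Gamma_G$ is the simple undirected graph with vertex set $G\setminus Z(G)$, in which two distinct vertices $u,v$ are adjacent if and only if $uv\ne vu$. For a connected graph $H$, $d_{uv}$ denotes the length of a shortest path between $u$ and $v$; the distance matrix $D(H)$ has $(u,v)$-entry $d_{uv}$. The transmission of a vertex $v$ is $\sum_{u} d_{uv}$, and $Tr(H)$ is the diagonal matrix of vertex transmissions. The distance Laplacian matrix is $D^L(H)=Tr(H)-D(H)$. *)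

(* Defs.v *)
From HB Require Import structures.
From mathcomp Require Import all_boot all_order all_algebra all_fingroup all_solvable all_field.
Set Implicit Arguments. Unset Strict Implicit. Unset Printing Implicit Defensive.
Import GRing.Theory Num.Theory.

Section NonCommutingGraph.
Variable gT : finGroupType.
Variable G : {group gT}.

Local Open Scope group_scope.

Definition nc_vertices : {set gT} := G :\: 'Z(G).

(* Adjacency: distinct vertices u, v with u v <> v u (non-commuting implies distinct). *)
Definition nc_adj (u v : gT) : bool :=
  [&& u \in nc_vertices, v \in nc_vertices & u * v != v * u].

Fixpoint nc_ball (k : nat) (u : gT) : {set gT} :=
  if k is k'.+1 then
    nc_ball k' u :|: [set y | [exists x in nc_ball k' u, nc_adj x y]]
  else [set u].

(* Graph distance d_uv = least k such that v is reachable from u within k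
   steps (any walk of length <= k shortens to a path); unreachable pairs would
   get #|gT|, but the graph is connected so this case does not arise. *)
Definition nc_dist (u v : gT) : nat :=
  find (fun k => v \in nc_ball k u) (iota 0 #|gT|).

Definition nc_vert (i : 'I_#|nc_vertices|) : gT := enum_val i.

Definition nc_distmx : 'M[algC]_#|nc_vertices| :=
  \matrix_(i, j) (nc_dist (nc_vert i) (nc_vert j))%:R%R.

Definition nc_transmx : 'M[algC]_#|nc_vertices| :=
  diag_mx (\row_j (\sum_i nc_distmx i j)%R).

Definition nc_distlap : 'M[algC]_#|nc_vertices| := (nc_transmx - nc_distmx)%R.

End NonCommutingGraph.

(* Main.v *)
Require Import Defs.
From HB Require Import structures.
From mathcomp Require Import all_boot all_order all_algebra all_fingroup all_solvable all_field.
From mathcomp Require Import zify ring lra.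
Import GRing.Theory Num.Theory.
Set Implicit Arguments. Unset Strict Implicit. Unset Printing Implicit Defensive.

Lemma pow2mod3 i : 2 ^ i %% 3 = if odd i then 2 else 1.
Proof.
elim: i => // i IH; rewrite expnS -modnMmr IH /=.
by case: (odd i).
Qed.

Definition Cc (o o' : bool) (j j' : nat) :=
  ((j * (if o' then 2 else 1) + j') %% 3 == (j' * (if o then 2 else 1) + j) %% 3)%N.

Definition pt (o : bool) (j : nat) : nat := if o then j.+1 else 0.

Lemma Cc_arith o o' j j' : (j < 3)%N -> (j' < 3)%N -> (o || (j != 0%N)) -> (o' || (j' != 0%N)) ->
  Cc o o' j j' = (pt o j == pt o' j').
Proof.
case: o; case: o'; rewrite /Cc /pt;
  case: j => [|[|[|j]]] //; case: j' => [|[|[|j']]] //.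
Qed.

Section Grp.
Local Open Scope group_scope.
Variables (gT : finGroupType) (G : {group gT}) (a b : gT) (n : nat).
Hypotheses (n0 : (0 < n)%N) (hG : G :=: <<[set a; b]>>) (ha : a ^+ (2 * n) = 1)
  (hb : b ^+ 3 = 1) (hab : b ^ a = b^-1) (hcard : #|G| = (6 * n)%N).

Lemma binv : b^-1 = b ^+ 2.
Proof. by apply/eqP; rewrite eq_invg_mul -expgS hb. Qed.

Lemma conj_b m i : (b ^+ m) ^ (a ^+ i) = b ^+ (m * 2 ^ i).
Proof.
elim: i => [|i IH]; first by rewrite expg0 conjg1 expn0 muln1.
rewrite expgSr conjgM IH conjXg hab binv -expgM; congr (b ^+ _).
by rewrite expnS; lia.
Qed.

Lemma comm_ba m i : b ^+ m * a ^+ i = a ^+ i * b ^+ (m * 2 ^ i).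
Proof. by rewrite conjgC conj_b. Qed.

Lemma mul_ab i j i' j' :
  (a ^+ i * b ^+ j) * (a ^+ i' * b ^+ j') = a ^+ (i + i') * b ^+ (j * 2 ^ i' + j').
Proof.
by rewrite mulgA -(mulgA (a ^+ i)) comm_ba !mulgA -expgD -mulgA -expgD.
Qed.

Definition T := ('I_(2 * n) * 'I_3)%type.
Definition f (x : T) : gT := a ^+ x.1 * b ^+ x.2.

Lemma aG : a \in G. Proof. by rewrite hG mem_gen // !inE eqxx. Qed.
Lemma bG : b \in G. Proof. by rewrite hG mem_gen // !inE eqxx orbT. Qed.

Lemma fG x : f x \in G.
Proof. by rewrite groupM ?groupX ?aG ?bG. Qed.

Lemma f_mod i j : a ^+ i * b ^+ j \in f @: [set: T].
Proof.
have n2 : (0 < 2 * n)%N by lia.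
apply/imsetP; exists (Ordinal (ltn_pmod i n2), Ordinal (ltn_pmod j (isT : (0 < 3)%N))) => //.
by rewrite /f /= !expg_mod.
Qed.

Lemma im_group : group_set (f @: [set: T]).
Proof.
apply/group_setP; split.
  by rewrite -(mulg1 1) -{1}(expg0 a) -(expg0 b) f_mod.
move=> g h /imsetP [x _ ->] /imsetP [y _ ->].
by rewrite /f mul_ab f_mod.
Qed.

Lemma im_eq : f @: [set: T] = G.
Proof.
apply/eqP; rewrite eqEsubset; apply/andP; split.
  by apply/subsetP => g /imsetP [x _ ->]; exact: fG.
rewrite hG (gen_subG _ (Group im_group)); apply/subsetP => g; rewrite !inE => /orP [] /eqP ->.
  by rewrite -(mulg1 a) -(expg0 b) -{1}(expg1 a) f_mod.
by rewrite -(mul1g b) -(expg0 a) -[X in _ * X](expg1 b) f_mod.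
Qed.

Lemma f_inj : injective f.
Proof.
move=> x y; have : #|f @: [set: T]| == #|[set: T]|.
  by rewrite im_eq hcard cardsT card_prod !card_ord; apply/eqP; lia.
by move/imset_injP => h; apply: h; rewrite inE.
Qed.

Lemma f_mul x y : f x * f y = a ^+ (x.1 + y.1) * b ^+ (x.2 * 2 ^ y.1 + y.2).
Proof. by rewrite /f mul_ab. Qed.

Lemma bpow_eq m m' : (b ^+ m == b ^+ m') = (m %% 3 == m' %% 3)%N.
Proof.
have n2 : (0 < 2 * n)%N by lia.
rewrite -(expg_mod m hb) -(expg_mod m' hb).
apply/eqP/eqP => [h|->] //.
have := @f_inj (Ordinal n2, Ordinal (ltn_pmod m (isT : (0 < 3)%N)))
                (Ordinal n2, Ordinal (ltn_pmod m' (isT : (0 < 3)%N))).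
rewrite /f /= h => /(_ erefl) [].
by [].
Qed.


Lemma f_comm x y : (f x * f y == f y * f x) = Cc (odd x.1) (odd y.1) x.2 y.2.
Proof.
rewrite !f_mul (addnC y.1) /Cc.
have -> : (a ^+ (x.1 + y.1) * b ^+ (x.2 * 2 ^ y.1 + y.2) ==
           a ^+ (x.1 + y.1) * b ^+ (y.2 * 2 ^ x.1 + x.2)) =
          (b ^+ (x.2 * 2 ^ y.1 + y.2) == b ^+ (y.2 * 2 ^ x.1 + x.2)).
  by apply/eqP/eqP => [/mulgI|->].
rewrite bpow_eq -modnDml -modnMmr pow2mod3 modnDml.
by rewrite -[X in _ == X]modnDml -modnMmr pow2mod3 modnDml.
Qed.

Definition vtx' (x : T) : bool := odd x.1 || (val x.2 != 0%N).
Definition part' (x : T) : 'I_4 := inord (pt (odd x.1) x.2).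

Lemma f_center x : (f x \in 'Z(G)) = ~~ vtx' x.
Proof.
have n2 : (1 < 2 * n)%N by lia.
apply/centerP/idP => [[_ hc]|].
  apply/negP => hv.
  move: hv; rewrite /vtx'; case ho: (odd x.1) => /= hv.
    have := hc (f (Ordinal (ltnW n2), Ordinal (isT : (1 < 3)%N))) (fG _).
    move/eqP; rewrite f_comm ho /= /Cc.
    by move: (ltn_ord x.2) hv; case: (nat_of_ord x.2) => [|[|[|j]]].
  have := hc (f (Ordinal n2, Ordinal (isT : (0 < 3)%N))) (fG _).
  move/eqP; rewrite f_comm ho /= /Cc.
  by move: (ltn_ord x.2) hv; case: (nat_of_ord x.2) => [|[|[|j]]].
rewrite /vtx' negb_or negbK => /andP [ho hj].
split; first exact: fG.
move=> g; rewrite -im_eq => /imsetP [y _ ->].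
apply/eqP; rewrite f_comm (negPf ho) /Cc (eqP hj) /=.
by rewrite mul0n add0n addn0 muln1.
Qed.

Lemma f_comm_v x y : vtx' x -> vtx' y -> (f x * f y == f y * f x) = (part' x == part' y).
Proof.
move=> hx hy; rewrite f_comm Cc_arith //.
have h4 : forall o (j : 'I_3), (pt o j <= 3)%N.
  by move=> [] [j hj] /=; rewrite /pt //; lia.
rewrite /part'; apply/eqP/eqP => [->//|h].
by move: (congr1 (@nat_of_ord 4) h); rewrite !inordK ?ltnS ?h4.
Qed.

Local Notation V := (nc_vertices G).

Lemma inV x : (f x \in V) = vtx' x.
Proof. by rewrite /nc_vertices in_setD f_center negbK fG andbT. Qed.

Lemma V_inv g : g \in V -> exists2 x, vtx' x & g = f x.
Proof.
move=> gV; have : g \in G by move: gV; rewrite /nc_vertices in_setD => /andP [].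
rewrite -im_eq => /imsetP [x _ hx]; exists x => //.
by rewrite -inV -hx.
Qed.

Definition part (g : gT) : 'I_4 := if [pick x | f x == g] is Some x then part' x else ord0.

Lemma part_f x : part (f x) = part' x.
Proof.
rewrite /part; case: pickP => [y /eqP /f_inj -> //|h].
by have := h x; rewrite eqxx.
Qed.

Lemma adj_part u v : u \in V -> v \in V -> nc_adj G u v = (part u != part v).
Proof.
move=> /V_inv [x hx ->] /V_inv [y hy ->].
by rewrite /nc_adj !inV hx hy /= f_comm_v // !part_f.
Qed.

Lemma other_part u : u \in V -> exists2 w, w \in V & part w != part u.
Proof.
have n2 : (1 < 2 * n)%N by lia.
move=> /V_inv [x hx ->]; rewrite part_f.
case ho: (odd x.1).
  exists (f (Ordinal (ltnW n2), Ordinal (isT : (1 < 3)%N))); first by rewrite inV.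
  rewrite part_f /part' /= ho /pt; apply/eqP => /(congr1 (@nat_of_ord 4)).
  by rewrite !inordK //; move: (ltn_ord x.2); lia.
exists (f (Ordinal n2, Ordinal (isT : (0 < 3)%N))); first by rewrite inV.
rewrite part_f /part' /= ho /pt; apply/eqP => /(congr1 (@nat_of_ord 4)).
by rewrite !inordK.
Qed.

Lemma card_gT : (3 <= #|gT|)%N.
Proof.
have := subset_leq_card (subsetT G); rewrite hcard cardsT => h.
apply: leq_trans _ h; apply: (@leq_trans 6) => //; by rewrite -{1}(muln1 6) leq_mul2l.
Qed.

Lemma dist_eq u v : u \in V -> v \in V ->
  nc_dist G u v = if u == v then 0%N else if part u == part v then 2%N else 1%N.
Proof.
move=> uV vV; rewrite /nc_dist.
have := card_gT; case: #|gT| => [|[|[|m]]] // _.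
have E : forall P : pred nat, find P (iota 0 m.+3) =
   if P 0%N then 0%N else if P 1%N then 1%N else if P 2%N then 2%N else (find P (iota 3 m)).+3.
  by move=> P /=; case: (P 0%N); case: (P 1%N); case: (P 2%N).
rewrite E; cbv beta.
have b0 : (v \in nc_ball G 0 u) = (v == u) by rewrite /= inE.
have b1 : forall w, (w \in nc_ball G 1 u) = (w == u) || nc_adj G u w.
  move=> w; rewrite /= !inE; congr (_ || _); apply/existsP/idP => [[z]|h].
    by rewrite !inE => /andP [/eqP ->].
  by exists u; rewrite !inE eqxx.
have b2 : (v \in nc_ball G 2 u) = (v \in nc_ball G 1 u) || [exists x in nc_ball G 1 u, nc_adj G x v].
  by rewrite (_ : nc_ball G 2 u = nc_ball G 1 u :|: [set y | [exists x in nc_ball G 1 u, nc_adj G x y]]) // !inE.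
rewrite b0 b2 b1 (eq_sym v u).
case: eqP => [//|uv]; rewrite adj_part //.
case: eqP => hp /=; last by [].
have -> : [exists x in nc_ball G 1 u, nc_adj G x v].
  have [w wV hw] := other_part uV.
  apply/existsP; exists w; rewrite b1 adj_part // (eq_sym (part u)) hw orbT /=.
  by rewrite adj_part // -hp.
by [].
Qed.

Lemma V_img : V = f @: [set x | vtx' x].
Proof.
apply/setP => g; apply/idP/imsetP => [/V_inv [x hx ->]|[x]]; first by exists x; rewrite ?inE.
by rewrite inE => hx ->; rewrite inV.
Qed.

Lemma count_V (P : gT -> nat) :
  (\sum_(i < #|V|) P (enum_val i) = \sum_(x : T) (if vtx' x then P (f x) else 0))%N.
Proof.
rewrite -(big_enum_val P) V_img big_imset /=; last by move=> x y _ _; apply: f_inj.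
by rewrite big_mkcond /=; apply: eq_bigr => x _; rewrite inE.
Qed.

Lemma sum_odd (A B : nat) : (\sum_(i < 2 * n) (if odd i then A else B) = n * (A + B))%N.
Proof.
rewrite -(big_mkord xpredT (fun i => if odd i then A else B)).
elim: (n) => [|m IH]; first by rewrite big_geq.
rewrite (_ : (2 * m.+1 = (2 * m).+1.+1)%N); last by lia.
rewrite !big_nat_recr //= IH oddM /=.
lia.
Qed.

Lemma sum_T (g : bool -> nat -> nat) :
  (\sum_(x : T) g (odd x.1) x.2 = n * (g true 0 + g true 1 + g true 2 + (g false 0 + g false 1 + g false 2)))%N.
Proof.
rewrite -(pair_big xpredT xpredT (fun (i : 'I_(2 * n)) (j : 'I_3) => g (odd i) j)) /=.
rewrite -sum_odd; apply: eq_bigr => i _.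
by rewrite !big_ord_recr big_ord0 /=; case: (odd i).
Qed.

Lemma inord_eq (q : 'I_4) m : (m < 4)%N -> (inord m == q) = (m == val q).
Proof. by move=> hm; rewrite -val_eqE /= inordK. Qed.

Lemma card_V : #|V| = (5 * n)%N.
Proof.
have := count_V (fun _ => 1%N); rewrite sum_nat_const card_ord muln1 => ->.
rewrite (eq_bigr (fun x : T => (fun o (j : nat) => if o || (j != 0%N) then 1 else 0)%N (odd x.1) x.2)) //.
rewrite (sum_T (fun o (j : nat) => if o || (j != 0%N) then 1 else 0)%N) /=; lia.
Qed.

End Grp.

Section LinAll.
Local Open Scope ring_scope.


Lemma sum_ind (R : nzRingType) (I : finType) (a : I) (f : I -> R) :
  \sum_q ((a == q)%:R * f q) = f a.
Proof.
rewrite (bigD1 a) //= eqxx mul1r big1 ?addr0 // => q /negPf.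
by rewrite eq_sym => ->; rewrite mul0r.
Qed.

Lemma sum_indr (R : nzRingType) (I : finType) (a : I) (f : I -> R) :
  \sum_q (f q * (q == a)%:R) = f a.
Proof.
rewrite (bigD1 a) //= eqxx mulr1 big1 ?addr0 // => q /negPf.
by move=> ->; rewrite mulr0.
Qed.

Lemma sylvester (R : comNzRingType) m n (A : 'M[R]_(m, n)) (B : 'M[R]_(n, m)) :
  \det (1%:M + A *m B) = \det (1%:M + B *m A).
Proof.
have E1 : block_mx 1%:M 0 B 1%:M *m block_mx 1%:M (- A) 0 (1%:M + B *m A)
          = block_mx 1%:M (- A) B 1%:M.
  rewrite mulmx_block !mul1mx !mul0mx !mulmx1 ?mulmx0 ?addr0 ?add0r.
  by rewrite mulmxN addrCA addNr addr0.
have E2 : block_mx 1%:M A 0 1%:M *m block_mx 1%:M (- A) B 1%:M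
          = block_mx (1%:M + A *m B) 0 B 1%:M.
  rewrite mulmx_block !mul1mx !mul0mx !mulmx1 !add0r.
  by rewrite addNr.
have := congr1 determinant E1; have := congr1 determinant E2.
rewrite !det_mulmx det_ublock det_lblock det_ublock det_lblock !det1 !mul1r !mulr1.
by move=> -> ->.
Qed.

Section Lin.
Variable F : fieldType.
Variables (N k : nat) (p : 'I_N -> 'I_k) (x : F).

Definition sz q := #|[pred i | p i == q]|.
Definition cc q := x - (N + sz q)%:R.
Definition yy := x - N%:R.
Definition dn (i j : 'I_N) : nat := if i == j then 0%N else if p i == p j then 2%N else 1%N.
Definition Dm : 'M[F]_N := \matrix_(i, j) (dn i j)%:R.
Definition Lm : 'M[F]_N := diag_mx (\row_j \sum_i Dm i j) - Dm.

Lemma sum_part (q : 'I_k) (g : 'I_N -> F) :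
  \sum_i ((p i == q)%:R * g i) = \sum_(i | p i == q) g i.
Proof.
rewrite [RHS]big_mkcond /=; apply: eq_bigr => i _.
by case: (p i == q); rewrite ?mul1r ?mul0r.
Qed.

Lemma sum_sz q : \sum_i ((p i == q)%:R : F) = (sz q)%:R.
Proof.
rewrite (eq_bigr (fun i => (p i == q)%:R * 1)); last by move=> i _; rewrite mulr1.
by rewrite sum_part sumr_const /sz.
Qed.

Lemma sum_all_sz : \sum_q ((sz q)%:R : F) = N%:R.
Proof.
rewrite (eq_bigr (fun q => \sum_i ((p i == q)%:R : F))); last by move=> q _; rewrite sum_sz.
rewrite exchange_big /=.
rewrite (eq_bigr (fun _ => 1)); first by rewrite sumr_const card_ord.
move=> i _; rewrite -[RHS](sum_ind (p i) (fun _ => (1 : F))).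
by apply: eq_bigr => q _; rewrite mulr1.
Qed.

Definition Em : 'M[F]_(N,k) := \matrix_(i,q) (p i == q)%:R.
Definition Km : 'M[F]_k := 1%:M + const_mx 1.
Definition Cd : 'M[F]_N := diag_mx (\row_i cc (p i)).

Lemma trans_eq j : \sum_i Dm i j = (N + sz (p j))%:R - 2.
Proof.
have -> : \sum_i Dm i j = \sum_i (1 + (p i == p j)%:R - 2 * (i == j)%:R).
  apply: eq_bigr => i _; rewrite mxE /dn.
  case: eqP => [->|ij]; first by rewrite eqxx mulr1 /=; ring.
  by rewrite /= mulr0 subr0; case: (p i == p j) => /=; ring.
rewrite !big_split /= sumr_const card_ord sum_sz sumrN.
rewrite (eq_bigr (fun i => 2 * (i == j)%:R)) // -mulr_sumr.
have h : \sum_i ((i == j)%:R : F) = 1.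
  by rewrite -[RHS](sum_indr j (fun _ => (1:F))); apply: eq_bigr => *; rewrite mul1r.
by rewrite h mulr1 natrD.
Qed.

Lemma A_decomp : x%:M - Lm = Cd + Em *m Km *m Em^T.
Proof.
have EK : Em *m Km = Em + const_mx 1.
  rewrite /Km mulmxDr mulmx1; congr (_ + _).
  apply/matrixP => i q; rewrite !mxE.
  rewrite -[RHS](sum_ind (p i) (fun _ => (1:F))).
  by apply: eq_bigr => r _; rewrite !mxE.
rewrite EK; apply/matrixP => i j; rewrite !mxE.
have -> : \sum_q (Em + const_mx 1) i q * Em^T q j = (p i == p j)%:R + 1.
  rewrite (eq_bigr (fun q => (p i == q)%:R * (p j == q)%:R + 1 * (p j == q)%:R)); last first.
    by move=> q _; rewrite !mxE mulrDl.
  rewrite big_split /= !sum_ind eq_sym; congr (_ + _).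
  rewrite -[RHS](sum_ind (p j) (fun _ => (1:F))).
  by apply: eq_bigr => r _; rewrite mul1r mulr1.
rewrite trans_eq /dn /cc.
case: eqP => [<-|ij] /=; first by rewrite eqxx !mulr1n subr0 /=; ring.
by rewrite !mulr0n sub0r add0r opprK; case: (p i == p j); rewrite /= ?add0r.
Qed.

Hypothesis hc : forall q, cc q != 0.
Hypothesis hy : yy != 0.

Definition Ci : 'M[F]_N := diag_mx (\row_i (cc (p i))^-1).
Definition dd q := (sz q)%:R / cc q.
Definition Dl : 'M[F]_k := diag_mx (\row_q dd q).

Lemma CdCi : Cd *m Ci = 1%:M.
Proof.
apply/matrixP => i j; rewrite /Cd mul_diag_mx !mxE.
by case: eqP => _; rewrite ?mulr1n ?mulr0n ?mulr0 ?divff.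
Qed.

Lemma Dl_eq : Em^T *m (Ci *m Em) = Dl.
Proof.
apply/matrixP => q r; rewrite /Ci mul_diag_mx !mxE.
rewrite (eq_bigr (fun i => (p i == q)%:R * ((cc (p i))^-1 * (p i == r)%:R))); last first.
  by move=> i _; rewrite !mxE.
rewrite sum_part (eq_bigr (fun _ => (cc q)^-1 * (q == r)%:R)); last first.
  by move=> i /eqP ->.
have -> : forall c : F, \sum_(i | p i == q) c = c *+ sz q by move=> c; rewrite sumr_const.
rewrite /dd; have [->|qr] := eqVneq q r; first by rewrite ?eqxx ?mulr1 ?mulr1n -[LHS]mulr_natl.
by rewrite /= !mulr0n mulr0 mul0rn.
Qed.

Lemma det_step1 : \det (x%:M - Lm) = \det Cd * \det (1%:M + Km *m Dl).
Proof.
have -> : x%:M - Lm = Cd *m (1%:M + (Ci *m Em) *m (Km *m Em^T)).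
  by rewrite A_decomp mulmxDr mulmx1 !mulmxA CdCi mul1mx.
by rewrite det_mulmx sylvester -!mulmxA Dl_eq.
Qed.

Lemma cc_yy q : cc q = yy - (sz q)%:R.
Proof. by rewrite /cc /yy natrD opprD addrA. Qed.

Lemma one_dd q : 1 + dd q = yy / cc q.
Proof.
have h := hc q; rewrite /dd; move: h; rewrite cc_yy => h.
by field.
Qed.

Lemma one_dd_neq0 q : 1 + dd q != 0.
Proof. by rewrite one_dd mulf_neq0 ?invr_eq0. Qed.

Definition Pm : 'M[F]_k := diag_mx (\row_q (1 + dd q)).
Definition Pim : 'M[F]_k := diag_mx (\row_q (1 + dd q)^-1).
Definition um : 'cV[F]_k := const_mx 1.
Definition vm : 'rV[F]_k := \row_q dd q.

Lemma det_step2 : \det (1%:M + Km *m Dl) = (\prod_q (1 + dd q)) * (1 + \sum_q dd q / (1 + dd q)).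
Proof.
have -> : 1%:M + Km *m Dl = Pm *m (1%:M + (Pim *m um) *m vm).
  rewrite mulmxDr mulmx1 !mulmxA.
  have -> : Pm *m Pim = 1%:M.
    apply/matrixP => i j; rewrite /Pm mul_diag_mx !mxE.
    by case: eqP => _; rewrite ?mulr1n ?mulr0n ?mulr0 ?divff ?one_dd_neq0.
  rewrite mul1mx /Km mulmxDl mul1mx addrA; congr (_ + _).
    apply/matrixP => i j; rewrite /Pm /Dl !mxE.
    by case: eqP => _; rewrite ?mulr1n ?mulr0n ?addr0.
  apply/matrixP => i j; rewrite !mxE big_ord1 !mxE.
  rewrite (eq_bigr (fun q => dd j * (q == j)%:R)); last first.
    move=> q _; rewrite !mxE mul1r.
    by case: eqP => [->|_]; rewrite ?mulr1n ?mulr1 ?mulr0n ?mulr0.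
  by rewrite sum_indr mul1r.
rewrite det_mulmx sylvester det_mx11 /Pm det_diag !mxE.
congr (_ * (_ + _)); first by apply: eq_bigr => q _; rewrite mxE.
apply: eq_bigr => q _; rewrite !mxE.
rewrite (eq_bigr (fun j => (q == j)%:R * (1 + dd j)^-1)) ?sum_ind //.
move=> j _; rewrite !mxE mulr1.
by case: eqP => [->|_]; rewrite ?mulr1n ?mul1r ?mulr0n ?mul0r.
Qed.

Lemma det_final :
  \det (x%:M - Lm) * (\prod_q cc q) * yy = (\prod_i cc (p i)) * yy ^+ k * x.
Proof.
rewrite det_step1 det_step2 /Cd det_diag.
have -> : \prod_i (\row_i cc (p i)) 0 i = \prod_i cc (p i) by apply: eq_bigr => i _; rewrite mxE.
have h1 : \prod_q (1 + dd q) * \prod_q cc q = yy ^+ k.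
  rewrite -big_split /= (eq_bigr (fun _ => yy)); first by rewrite prodr_const card_ord.
  by move=> q _; rewrite one_dd -mulrA mulVf ?mulr1.
have h2 : (1 + \sum_q dd q / (1 + dd q)) * yy = x.
  rewrite (eq_bigr (fun q => (sz q)%:R / yy)); last first.
    move=> q _; rewrite one_dd /dd; have := hc q => h; field.
    by rewrite h hy.
  rewrite -mulr_suml sum_all_sz mulrDl mul1r mulfVK // /yy; ring.
rewrite -h1 -h2; ring.
Qed.

End Lin.

End LinAll.

Lemma card_sum (I : finType) (P : pred I) : #|P| = (\sum_i (P i : nat))%N.
Proof. by rewrite -sum1_card big_mkcond /=; apply: eq_bigr => i _; rewrite unfold_in; case: (P i). Qed.

Lemma prod_part (F : fieldType) N k (p : 'I_N -> 'I_k) (g : 'I_k -> F) :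
  (\prod_i g (p i) = \prod_q g q ^+ sz p q)%R.
Proof.
rewrite (partition_big p xpredT) //=; apply: eq_bigr => q _.
rewrite (eq_bigr (fun _ => g q)); last by move=> i /eqP ->.
by rewrite prodr_const.
Qed.

Section AlgS.
Local Open Scope ring_scope.
Lemma alg (R : comNzRingType) (X : R) (n : nat) : (0 < n)%N ->
 (X - (5 * n + n * 2)%:R) ^+ (n * 2) * ((X - (5 * n + n * 1)%:R) ^+ (n * 1) * ((X - (5 * n + n * 1)%:R) ^+ (n * 1) * ((X - (5 * n + n * 1)%:R) ^+ (n * 1) * 1))) * (X - (5 * n)%:R) ^+ 4 * X = X * ((X - (5 * n)%:R) * ((X - (5 * n)%:R) * (X - (5 * n)%:R))) * (X - (6 * n)%:R) ^+ (3 * (n - 1)) * (X - (7 * n)%:R) ^+ (2 * n - 1) * ((X - (5 * n + n * 2)%:R) * ((X - (5 * n + n * 1)%:R) * ((X - (5 * n + n * 1)%:R) * ((X - (5 * n + n * 1)%:R) * 1))) * (X - (5 * n)%:R)).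
Proof.
move=> n0.
have e7 : (5 * n + n * 2 = 7 * n)%N by lia.
have e6 : (5 * n + n * 1 = 6 * n)%N by lia.
rewrite e7 e6.
set A := X - (7 * n)%:R; set C := X - (6 * n)%:R; set D := X - (5 * n)%:R.
case: n n0 @A @C @D e7 e6 => // m _ A C D _ _.
rewrite (_ : (m.+1 * 2 = (2 * m + 1).+1)%N); last by lia.
rewrite (_ : (3 * (m.+1 - 1) = m * 3)%N); last by lia.
rewrite (_ : (2 * m.+1 - 1 = 2 * m + 1)%N); last by lia.
rewrite muln1 exprS exprM !exprS.
ring.
Qed.
End AlgS.

Section Final.
Variables (gT : finGroupType) (G : {group gT}) (a b : gT) (n : nat).
Hypotheses (n0 : (0 < n)%N) (hG : G :=: <<[set a; b]>>%g) (ha : (a ^+ (2 * n))%g = 1%g)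
  (hb : (b ^+ 3)%g = 1%g) (hab : (b ^ a)%g = (b^-1)%g) (hcard : #|G| = (6 * n)%N).

Definition pp (i : 'I_#|nc_vertices G|) : 'I_4 := part a b n (nc_vert i).

Lemma sz_pp q : sz pp q = (n * (if val q == 0%N then 2 else 1))%N.
Proof.
rewrite /sz (card_sum [pred i | pp i == q]).
rewrite (eq_bigr (fun i => (fun g => (part a b n g == q : nat)) (enum_val i))); last first.
  by move=> i _; rewrite /pp /nc_vert.
rewrite (count_V n0 hG ha hb hab hcard (fun g => (part a b n g == q : nat))).
rewrite (eq_bigr (fun x : T n => (fun o (j : nat) => if o || (j != 0%N) then (inord (pt o j) == q : nat) else 0%N) (odd x.1) x.2)); last first.
  by move=> x _; rewrite (part_f n0 hG ha hb hab hcard).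
rewrite (sum_T n0 hcard (fun o (j : nat) => if o || (j != 0%N) then (inord (pt o j) == q : nat) else 0%N)) /=.
rewrite /pt !inord_eq //.
by case: q => [[|[|[|[|q]]]] hq] //=; lia.
Qed.

Lemma distmx_eq : nc_distmx G = Dm algC pp.
Proof.
apply/matrixP => i j; rewrite !mxE (dist_eq n0 hG ha hb hab hcard) ?enum_valP //.
by rewrite /nc_vert (inj_eq enum_val_inj) /dn.
Qed.

Lemma distlap_eq : nc_distlap G = Lm algC pp.
Proof. by rewrite /nc_distlap /nc_transmx /Lm distmx_eq. Qed.

Local Open Scope ring_scope.
Lemma main_eq : char_poly (nc_distlap G)
  = ('X * ('X - (5 * n)%:R%:P) ^+ 3 * ('X - (6 * n)%:R%:P) ^+ (3 * (n - 1))
       * ('X - (7 * n)%:R%:P) ^+ (2 * n - 1))%R.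
Proof.
rewrite distlap_eq.
pose x : {fraction {poly algC}} := tofrac 'X.
have tC : forall m : nat, tofrac (((m%:R : algC)%:P)) = (m%:R : {fraction {poly algC}}) by move=> m; rewrite !rmorph_nat.
have xsub : forall m : nat, (x - m%:R = tofrac ('X - (m%:R : algC)%:P))%R.
  by move=> m; rewrite rmorphB !rmorph_nat.
have xneq : forall m : nat, (x - m%:R != 0)%R.
  by move=> m; rewrite xsub tofrac_eq0 polyXsubC_eq0.
have hc : forall q, cc pp x q != 0%R by move=> q; apply: xneq.
have hy : yy #|nc_vertices G| x != 0%R by apply: xneq.
have key := det_final hc hy.
have hcp : tofrac (char_poly (Lm algC pp)) = \det (x%:M - Lm _ pp).
  rewrite /char_poly -det_map_mx; congr (\det _); apply/matrixP => i j.
  rewrite !mxE !(rmorphB, rmorphMn, rmorph_sum); congr (_ *+ _ - (_ *+ _ - _)).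
  by apply: eq_bigr => k _; rewrite !mxE !rmorph_nat.

apply/eqP; rewrite -tofrac_eq hcp; apply/eqP.
have hQ := mulf_neq0 (introT (@prodf_neq0 _ _ xpredT (cc pp x)) (fun q _ => hc q)) hy.
apply: (mulIf hQ); rewrite mulrA key.
rewrite (prod_part pp (cc pp x)) !big_ord_recl !big_ord0 /cc /yy !sz_pp.
have e0 : (\val (ord0 : 'I_4) == 0%N) = true by [].
have e1 : (\val (lift ord0 (ord0 : 'I_3)) == 0%N) = false by [].
have e2 : (\val (lift ord0 (lift ord0 (ord0 : 'I_2))) == 0%N) = false by [].
have e3 : (\val (lift ord0 (lift ord0 (lift ord0 (ord0 : 'I_1)))) == 0%N) = false by [].
rewrite e0 e1 e2 e3.
have cN : forall m, ((#|nc_vertices G| + m)%:R : {fraction {poly algC}}) = (5 * n + m)%:R.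
  by move=> m; rewrite (card_V n0 hG ha hb hab hcard).
have cY : ((#|nc_vertices G|)%:R : {fraction {poly algC}}) = (5 * n)%:R.
  by rewrite (card_V n0 hG ha hb hab hcard).
rewrite !cN cY !(rmorphM, rmorphXn, rmorphB) !rmorph_nat.
exact: (alg x n0).
Qed.


End Final.

(* The spectrum (with multiplicity) is encoded as the characteristic polynomial
   X (X-5n)^3 (X-6n)^(3(n-1)) (X-7n)^(2n-1). *)
Theorem theorem5p2 (gT : finGroupType) (G : {group gT}) (a b : gT) (n : nat) :
  (0 < n)%N ->
  G :=: <<[set a; b]>>%g ->
  (a ^+ (2 * n))%g = 1%g ->
  (b ^+ 3)%g = 1%g ->
  (b ^ a)%g = (b^-1)%g ->
  #|G| = (6 * n)%N ->
  char_poly (nc_distlap G)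
  = ('X * ('X - (5 * n)%:R%:P) ^+ 3 * ('X - (6 * n)%:R%:P) ^+ (3 * (n - 1))
       * ('X - (7 * n)%:R%:P) ^+ (2 * n - 1))%R.
Proof.
move=> n0 hG ha hb hab hcard.
exact: (main_eq n0 hG ha hb hab hcard).
Qed.
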